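(* Let $A$ be a generator matrix of the repetition $[n_a,1,n_a]_q$ code and let $B$ be a parity-check matrix of a $q$-ary Hamming code with parameters $[n_b,k_b,3]_q$, where $n_b=(q^{m_b}-1)/(q-1)$ and $k_b=n_b-m_b$. Let $C$ be the linear code over $\mathbb{F}_q$ with parity-check matrix $H=A\otimes B$. Then: (i) $C$ has length $n=n_a n_b$, dimension $k=n-m_b$ and covering radius $\rho=1$; (ii) if $n_a>1$ then the minimum distance of $C$ is $d=2$, and if $n_a=1$ then $d=3$; (iii) $\mathrm{Aut}(C)$ is transitive, and consequently $C$ is completely transitive and completely regular.
   Context: $\mathbb{F}_q$ is the finite field with $q$ elements. The repetition $[n,1,n]_q$ code is $\{(c,\dots,c):c\in\mathbb{F}_q\}$. For $m\ge2$, a $q$-ary Hamming code of length $(q^m-1)/(q-1)$ is a linear code with an $m\times (q^m-1)/(q-1)$ parity-check matrix whose columns are nonzero and pairwise linearly independent. The Kronecker product $A\otimes B$ of $A=[a_{r,s}]$ and $B$ is obtained by replacing each entry $a_{r,s}$ by the block $a_{r,s}B$. Covering radius $\rho=\max_{\bf v}\min_{{\bf x}\in C}d({\bf v},{\bf x})$ (Hamming distance). A linear automorphism of $\mathbb{F}_q^n$ is ${\bf x}\mapsto {\bf x}M$ with $M$ a monomial matrix; $\mathrm{Aut}(C)$ is the group of linear automorphisms preserving $C$; it is called transitive if it acts transitively on the set of weight-one vectors of $\mathbb{F}_q^n$. $\mathrm{Aut}(C)$ acts on cosets by $\phi({\bf v}+C)=\phi({\bf v})+C$; $C$ is completely transitive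 if this action has exactly $\rho+1$ orbits. $C$ is completely regular if for every vector ${\bf x}$, with $t=d({\bf x},C)$, the number of codewords at distance $i$ from ${\bf x}$ depends only on $t$ and $i$. *)

(* Defs.v *)
From HB Require Import structures.
From mathcomp Require Import all_boot all_order all_algebra.
Set Implicit Arguments. Unset Strict Implicit. Unset Printing Implicit Defensive.
Import Order.TTheory GRing.Theory Num.Theory.
Local Open Scope ring_scope.

Lemma kdiv_lt m1 m2 (k : 'I_(m1 * m2)) : (k %/ m2 < m1)%N.
Proof.
have := ltn_ord k; move: (nat_of_ord k) => kk; clear k; case: m2 => [|m2]; first by rewrite muln0.
by rewrite ltn_divLR.
Qed.

Lemma kmod_lt m1 m2 (k : 'I_(m1 * m2)) : (k %% m2 < m2)%N.
Proof.
have := ltn_ord k; move: (nat_of_ord k) => kk; clear k; case: m2 => [|m2]; first by rewrite muln0.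
by rewrite ltn_mod.
Qed.

Definition kdiv m1 m2 (k : 'I_(m1 * m2)) : 'I_m1 := Ordinal (kdiv_lt k).
Definition kmod m1 m2 (k : 'I_(m1 * m2)) : 'I_m2 := Ordinal (kmod_lt k).

(* Kronecker product: the entry a_{r,s} of A is replaced by the block
   a_{r,s} B, so entry (r*m2 + i, s*n2 + j) of A (x) B is a_{r,s} * b_{i,j}. *)
Definition kron (R : pzRingType) m1 n1 m2 n2
  (A : 'M[R]_(m1, n1)) (B : 'M[R]_(m2, n2)) : 'M[R]_(m1 * m2, n1 * n2) :=
  \matrix_(i, j) (A (kdiv i) (kdiv j) * B (kmod i) (kmod j)).

Section Coding.
Variable F : finFieldType.

Definition wt n (x : 'rV[F]_n) : nat := #|[set i : 'I_n | x 0 i != 0]|.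
Definition hdist n (x y : 'rV[F]_n) : nat := wt (x - y).

(* A linear code of length n is represented by a matrix whose row space is
   the code; x is a codeword iff (x <= C)%MS. *)

(* The code with parity-check matrix H : {x | H x^T = 0} = {x | x H^T = 0}. *)
Definition code_of_pcm m n (H : 'M[F]_(m, n)) : 'M[F]_n := kermx H^T.

Definition code_dim n (C : 'M[F]_n) : nat := \rank C.

(* d(x, C) = min over codewords c of d(x, c) (the code contains 0, and every
   distance is <= n, so n is a neutral initial value). *)
Definition dist_to_code n (C : 'M[F]_n) (x : 'rV[F]_n) : nat :=
  \big[minn/n]_(c : 'rV[F]_n | (c <= C)%MS) hdist x c.

Definition covering_radius n (C : 'M[F]_n) : nat :=
  \max_(v : 'rV[F]_n) dist_to_code C v.

Definition is_min_distance n (C : 'M[F]_n) (d : nat) : Prop :=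
  (exists2 c : 'rV[F]_n, (c <= C)%MS && (c != 0) & wt c = d) /\
  (forall c : 'rV[F]_n, (c <= C)%MS -> c != 0 -> (d <= wt c)%N).

Definition repetition_code n : {set 'rV[F]_n} :=
  [set x | [exists c : F, x == const_mx c]].

Definition is_generator_matrix k n (G : 'M[F]_(k, n)) (S : {set 'rV[F]_n}) : Prop :=
  row_free G /\ (forall x : 'rV[F]_n, (x <= G)%MS = (x \in S)).

Definition is_hamming_pcm m n (B : 'M[F]_(m, n)) : Prop :=
  (2 <= m)%N /\ n = ((#|F| ^ m - 1) %/ (#|F| - 1))%N /\
  (forall j : 'I_n, col j B != 0) /\
  (forall j j' : 'I_n, j != j' -> row_free (col_mx (col j B)^T (col j' B)^T)).

Definition monomialb n (M : 'M[F]_n) : bool :=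
  [forall i, #|[set j | M i j != 0]| == 1%N] &&
  [forall j, #|[set i | M i j != 0]| == 1%N].

Definition in_Aut n (C : 'M[F]_n) (M : 'M[F]_n) : bool :=
  monomialb M && [forall x : 'rV[F]_n, (x <= C)%MS ==> (x *m M <= C)%MS].

Definition Aut_transitive n (C : 'M[F]_n) : Prop :=
  forall u v : 'rV[F]_n, wt u = 1%N -> wt v = 1%N ->
    exists2 M, in_Aut C M & u *m M = v.

(* Orbits of the action of Aut(C) on cosets v + C:
   phi(v + C) = vM + C; the orbit of v + C is the set of all vectors lying in
   some coset phi(v + C). *)
Definition coset_orbit n (C : 'M[F]_n) (v : 'rV[F]_n) : {set 'rV[F]_n} :=
  [set w | [exists M, in_Aut C M && (w - v *m M <= C)%MS]].

Definition num_coset_orbits n (C : 'M[F]_n) : nat :=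
  #|[set coset_orbit C v | v : 'rV[F]_n]|.

Definition completely_transitive n (C : 'M[F]_n) : Prop :=
  num_coset_orbits C = (covering_radius C).+1.

Definition num_at_dist n (C : 'M[F]_n) (x : 'rV[F]_n) (i : nat) : nat :=
  #|[set c : 'rV[F]_n | (c <= C)%MS && (hdist x c == i)]|.

Definition completely_regular n (C : 'M[F]_n) : Prop :=
  forall x y : 'rV[F]_n, dist_to_code C x = dist_to_code C y ->
    forall i, num_at_dist C x i = num_at_dist C y i.

End Coding.

(* Main.v *)
Require Import Defs.
From HB Require Import structures.
From mathcomp Require Import all_boot all_order all_algebra.
From mathcomp Require Import fingroup perm.
Set Implicit Arguments. Unset Strict Implicit. Unset Printing Implicit Defensive.
Import GRing.Theory.
Local Open Scope ring_scope.

Section Main.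
Variables (F : finFieldType) (na mb nb : nat).
Variables (A : 'M[F]_(1, na)) (B : 'M[F]_(mb, nb)).
Hypothesis na_gt0 : (0 < na)%N.
Hypothesis hA : is_generator_matrix A (repetition_code F na).
Hypothesis hB : is_hamming_pcm B.

Lemma card_F_gt1 : (1 < #|F|)%N.
Proof.
have -> : #|F| = #|[set: F]| by rewrite cardsT.
apply: leq_trans (subset_leq_card (subsetT [set (0:F); 1])).
by rewrite cards2 eq_sym oner_eq0.
Qed.

Lemma nb_sum : nb = (\sum_(i < mb) #|F| ^ i)%N.
Proof.
case: hB => _ [e _]; rewrite {1}e.
have := predn_exp #|F| mb; rewrite -!subn1 => ->.
by rewrite mulKn // subn_gt0 card_F_gt1.
Qed.

Lemma nb_eq : (nb * (#|F| - 1))%N = (#|F| ^ mb - 1)%N.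
Proof. by rewrite nb_sum mulnC !subn1 predn_exp. Qed.

Lemma nb_ge3 : (3 <= nb)%N.
Proof.
case: hB => hm _; rewrite nb_sum.
have q2 := card_F_gt1.
suff: forall m, (2 <= m)%N -> (3 <= \sum_(i<m) #|F|^i)%N by apply.
case=> [|[|m]] // _.
rewrite !big_ord_recl /= expn0 expn1 addnA.
apply: leq_trans (leq_addr _ _); by rewrite ltnS.
Qed.

Definition b (j : 'I_nb) : 'rV[F]_mb := (col j B)^T.

Lemma b_neq0 j : b j != 0.
Proof.
case: hB => _ [_ [h _]]; apply: contraNneq (h j) => e.
by rewrite -[col j B]trmxK -/(b j) e trmx0.
Qed.

Lemma b_dep j j' c : b j = c *: b j' -> j = j'.
Proof.
move=> e; apply/eqP/negPn/negP => ne.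
case: hB => _ [_ [_ h]]; have := h _ _ ne; rewrite /row_free.
have s : (b j <= b j')%MS by rewrite e scalemx_sub.
rewrite -/(b j) -/(b j').
rewrite -(addsmxE (b j) (b j')).1 (addsmx_idPr s).1.
have := rank_leq_row (b j').
by move=> h1 /eqP h2; move: h1; rewrite h2.
Qed.

Lemma b_uniq s t c c' : c != 0 -> c *: b s = c' *: b t -> s = t /\ c = c'.
Proof.
move=> c0 e.
have e1 : b s = (c^-1 * c') *: b t by rewrite -scalerA -e scalerA mulVf ?scale1r.
have st := b_dep e1; subst t; split => //.
apply/eqP; rewrite -subr_eq0; apply/eqP.
have : (c - c') *: b s = 0 by rewrite scalerBl e subrr.
by move/eqP; rewrite scaler_eq0 (negPf (b_neq0 s)) orbF => /eqP.
Qed.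

Lemma cover (w : 'rV[F]_mb) : w != 0 -> exists j c, w = c *: b j.
Proof.
move=> w0.
pose D := setX [set: 'I_nb] (~: [set (0:F)]).
pose f (p : 'I_nb * F) := p.2 *: b p.1.
pose S := ~: [set (0 : 'rV[F]_mb)].
have injf : {in D &, injective f}.
  move=> [j c] [j' c']; rewrite !inE /= /f /= => c0 _ e.
  by case: (b_uniq c0 e) => -> ->.
have sub : f @: D \subset S.
  apply/subsetP => x /imsetP [[j c]]; rewrite !inE /= /f => c0 ->.
  by rewrite scaler_eq0 negb_or c0 b_neq0.
have eq : f @: D = S.
  apply/eqP; rewrite eqEcard sub /= card_in_imset // cardsX cardsT card_ord.
  by rewrite !cardsC1 card_mx mul1n -!subn1 nb_eq.
have : w \in f @: D by rewrite eq !inE.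
by case/imsetP => [[j c]] _ ->; exists j, c.
Qed.


Lemma nb_gt0 : (0 < nb)%N.
Proof. by apply: leq_trans nb_ge3. Qed.

Lemma mk_lt (r : 'I_na) (j : 'I_nb) : (r * nb + j < na * nb)%N.
Proof.
apply: (@leq_trans (r * nb + nb)); first by rewrite ltn_add2l.
by rewrite -mulSnr leq_mul2r ltn_ord orbT.
Qed.

Definition mk (r : 'I_na) (j : 'I_nb) : 'I_(na * nb) := Ordinal (mk_lt r j).

Lemma kdiv_mk r j : kdiv (mk r j) = r.
Proof. by apply: val_inj => /=; rewrite divnMDl ?nb_gt0 // divn_small // addn0. Qed.

Lemma kmod_mk r j : kmod (mk r j) = j.
Proof. by apply: val_inj => /=; rewrite modnMDl modn_small. Qed.

Lemma mk_kdiv l : mk (kdiv l) (kmod l) = l.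
Proof. by apply: val_inj => /=; rewrite -divn_eq. Qed.

Lemma mk_inj r j r' j' : mk r j = mk r' j' -> r = r' /\ j = j'.
Proof.
move=> e; split; [have := congr1 (@kdiv _ _) e | have := congr1 (@kmod _ _) e].
  by rewrite !kdiv_mk.
by rewrite !kmod_mk.
Qed.

Definition Bt : 'M[F]_(na * nb, mb) := \matrix_(l, i) B i (kmod l).

Lemma row_Bt l : row l Bt = b (kmod l).
Proof. by apply/rowP => i; rewrite !mxE. Qed.

Lemma A_const : exists2 a, a != 0 & A = const_mx a.
Proof.
case: hA => fr h.
have : A \in repetition_code F na by rewrite -h.
rewrite inE => /existsP [a /eqP eA]; exists a => //.
apply: contraTneq fr => a0; rewrite /row_free eA a0.
have -> : const_mx 0 = 0 :> 'rV[F]_na by apply/rowP => i; rewrite !mxE.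
by rewrite mxrank0.
Qed.

Definition C := code_of_pcm (kron A B).

Lemma memC (x : 'rV[F]_(na * nb)) : (x <= C)%MS = (x *m Bt == 0).
Proof.
case: A_const => a a0 eA.
have key : forall i, (x *m (kron A B)^T) 0 i = a * (x *m Bt) 0 (kmod i).
  move=> i; rewrite !mxE mulr_sumr; apply: eq_bigr => l _.
  by rewrite !mxE eA !mxE mulrCA.
rewrite /C /code_of_pcm sub_kermx.
apply/eqP/eqP => h.
  apply/rowP => i.
  have li : (i < 1 * mb)%N by rewrite mul1n.
  have := congr1 (fun M : 'M[F]_(1, 1 * mb) => M 0 (Ordinal li)) h; rewrite key !mxE.
  have -> : kmod (Ordinal li) = i by by apply: val_inj => /=; rewrite modn_small.
  by move/eqP; rewrite mulf_eq0 (negPf a0) /= => /eqP.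
by apply/rowP => i; rewrite key h !mxE mulr0.
Qed.


Lemma wt_eq0 n (x : 'rV[F]_n) : (wt x == 0%N) = (x == 0).
Proof.
rewrite /wt cards_eq0; apply/eqP/eqP => [h | ->].
  apply/rowP => i; rewrite mxE; apply/eqP/negPn/negP => nz.
  have : i \in [set i | x 0 i != 0] by rewrite inE.
  by rewrite h inE.
by apply/setP => i; rewrite !inE mxE eqxx.
Qed.

Lemma wt_delta n (l : 'I_n) (c : F) : c != 0 -> wt (c *: delta_mx 0 l) = 1%N.
Proof.
move=> c0; rewrite /wt (_ : [set i | _] = [set l]) ?cards1 //.
apply/setP => i; rewrite !inE !mxE eqxx /= mulf_eq0 (negPf c0) /= eq_sym.
case: (i == l) => /=; [by rewrite eq_sym oner_eq0 | by rewrite eqxx].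
Qed.

Lemma wt1P n (x : 'rV[F]_n) : wt x = 1%N -> exists l c, c != 0 /\ x = c *: delta_mx 0 l.
Proof.
rewrite /wt => /eqP /cards1P [l hl]; exists l, (x 0 l); split.
  have : l \in [set l] by rewrite inE.
  by rewrite -hl inE.
apply/rowP => i; rewrite !mxE eqxx /=.
case: (eqVneq l i) => [-> | ne]; first by rewrite mulr1.
rewrite mulr0; apply/eqP/negPn/negP => nz.
have : i \in [set i | x 0 i != 0] by rewrite inE.
by rewrite hl inE eq_sym (negPf ne).
Qed.

Lemma deltaM n p (l : 'I_n) (c : F) (M : 'M[F]_(n, p)) :
  (c *: delta_mx 0 l) *m M = c *: row l M.
Proof. by rewrite -scalemxAl -rowE. Qed.

Definition r0 : 'I_na := Ordinal na_gt0.

Lemma b_in_Bt j : (b j <= Bt)%MS.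
Proof. by rewrite -(kmod_mk r0 j) -row_Bt row_sub. Qed.

Lemma rank_Bt : \rank Bt = mb.
Proof.
apply/eqP; rewrite -/(row_full Bt) -sub1mx; apply/row_subP => i.
have : row i (1%:M : 'M[F]_mb) != 0.
  apply/negP => /eqP /rowP /(_ i); rewrite !mxE eqxx => /eqP.
  by rewrite oner_eq0.
case/cover => j [c ->]; by rewrite scalemx_sub // b_in_Bt.
Qed.

Lemma code_dimC : code_dim C = (na * nb - mb)%N.
Proof.
rewrite /code_dim -rank_Bt -mxrank_ker; apply: eqmx_rank.
apply/andP; split; apply/row_subP => i.
  by rewrite sub_kermx -memC row_sub.
by rewrite memC -sub_kermx row_sub.
Qed.

Lemma near (v : 'rV[F]_(na * nb)) : ~~ (v <= C)%MS ->
  exists2 c, (c <= C)%MS & wt (v - c) = 1%N.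
Proof.
rewrite memC => s0; case/cover: (s0) => j [c e].
have c0 : c != 0 by apply: contraNneq s0 => c0; rewrite e c0 scale0r.
exists (v - c *: delta_mx 0 (mk r0 j)).
  by rewrite memC mulmxBl deltaM row_Bt kmod_mk e subrr.
by rewrite opprB addrC subrK wt_delta.
Qed.

Lemma bigmin_le (T : finType) (P : pred T) (G : T -> nat) x i0 :
  P i0 -> (\big[minn/x]_(i | P i) G i <= G i0)%N.
Proof.
move=> Pi0; have : i0 \in index_enum T by rewrite mem_index_enum.
elim: (index_enum T) => [|a r IH] //; rewrite inE big_cons => /orP [/eqP <- | ir].
  by rewrite Pi0 geq_minl.
case: (P a); last exact: IH.
by apply: leq_trans (geq_minr _ _) (IH ir).
Qed.

Lemma dist_C (v : 'rV[F]_(na * nb)) :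
  dist_to_code C v = (if (v <= C)%MS then 0 else 1)%N.
Proof.
rewrite /dist_to_code; case: ifP => vC.
  apply/eqP; rewrite -leqn0; apply: leq_trans (bigmin_le _ _ vC) _.
  by rewrite /hdist subrr leqn0 wt_eq0.
apply/eqP; rewrite eqn_leq; apply/andP; split.
  case: (near (negbT vC)) => c cC wc.
  by apply: leq_trans (bigmin_le _ _ cC) _; rewrite /hdist wc.
apply: (big_ind (fun k => 1 <= k)%N).
- by rewrite muln_gt0 na_gt0 nb_gt0.
- by move=> x y hx hy; rewrite leq_min hx hy.
move=> c cC; rewrite /hdist lt0n wt_eq0 subr_eq0.
by apply: contraFneq vC => ->.
Qed.

Lemma cov_rad : covering_radius C = 1%N.
Proof.
rewrite /covering_radius; apply/eqP; rewrite eqn_leq; apply/andP; split.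
  apply: (big_ind (fun k => k <= 1)%N) => //.
    by move=> x y hx hy; rewrite geq_max hx hy.
  by move=> v _; rewrite dist_C; case: ifP.
pose j0 : 'I_nb := Ordinal nb_gt0.
apply: leq_trans (leq_bigmax (delta_mx 0 (mk r0 j0))).
rewrite dist_C memC -[delta_mx _ _]scale1r deltaM row_Bt kmod_mk scale1r.
by rewrite (negPf (b_neq0 j0)).
Qed.


Lemma wt_supp n (x : 'rV[F]_n) (S : {set 'I_n}) :
  (forall i, (x 0 i != 0) = (i \in S)) -> wt x = #|S|.
Proof. by move=> h; rewrite /wt; apply: eq_card => i; rewrite inE h. Qed.

Lemma C_wt_ge2 c : (c <= C)%MS -> c != 0 -> (2 <= wt c)%N.
Proof.
move=> cC c0; rewrite ltn_neqAle eq_sym lt0n wt_eq0 c0 andbT.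
apply/eqP => /wt1P [l [a [a0 e]]]; move: cC; rewrite memC e deltaM row_Bt.
by rewrite scaler_eq0 (negPf a0) (negPf (b_neq0 _)).
Qed.

Lemma mind2 : (1 < na)%N -> is_min_distance C 2.
Proof.
move=> na1; split; last by move=> c cC c0; apply: C_wt_ge2.
pose r1 : 'I_na := Ordinal na1; pose j0 : 'I_nb := Ordinal nb_gt0.
have ne : mk r0 j0 != mk r1 j0 by apply/eqP => /mk_inj [].
exists (delta_mx 0 (mk r0 j0) - delta_mx 0 (mk r1 j0)).
  apply/andP; split.
    rewrite memC mulmxBl -[delta_mx 0 (mk r0 j0)]scale1r -[delta_mx 0 (mk r1 j0)]scale1r.
    by rewrite !deltaM !row_Bt !kmod_mk subrr.
  apply/eqP => /rowP /(_ (mk r0 j0)); rewrite !mxE eqxx (negPf ne) subr0.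
  by move/eqP; rewrite oner_eq0.
rewrite (@wt_supp _ _ [set mk r0 j0; mk r1 j0]) ?cards2 ?ne // => i.
rewrite !inE !mxE /=.
have [-> | n0] := eqVneq i (mk r0 j0); first by rewrite (negPf ne) subr0 oner_eq0.
have [_ | n1] := eqVneq i (mk r1 j0); first by rewrite /= sub0r oppr_eq0 oner_eq0.
by rewrite /= subrr eqxx.
Qed.


Lemma mind3 : na = 1%N -> is_min_distance C 3.
Proof.
move=> na1.
have kd : forall l l' : 'I_(na * nb), l = l' \/ kmod l != kmod l' \/ l = l'.
  move=> l l'; have [e|ne] := eqVneq (kmod l) (kmod l'); last by right; left.
  left; rewrite -(mk_kdiv l) -(mk_kdiv l') e; congr mk; apply: val_inj.
  have h1 : (kdiv l < 1)%N by rewrite -na1 ltn_ord.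
  have h2 : (kdiv l' < 1)%N by rewrite -na1 ltn_ord.
  change (nat_of_ord (kdiv l) = nat_of_ord (kdiv l')).
  by move: h1 h2; case: (nat_of_ord (kdiv l)) => [|?]; case: (nat_of_ord (kdiv l')) => [|?].
split.
  pose j1 : 'I_nb := Ordinal (ltnW (ltnW nb_ge3)).
  pose j2 : 'I_nb := Ordinal (ltnW nb_ge3).
  have n12 : j1 != j2 by [].
  have s0 : b j1 + b j2 != 0.
    apply/eqP => e; move: n12; rewrite (@b_dep j1 j2 (-1)) ?eqxx //.
    by rewrite scaleN1r; apply/eqP; rewrite -subr_eq0 opprK e.
  case/cover: (s0) => j3 [c e].
  have c0 : c != 0 by apply: contraNneq s0 => c0; rewrite e c0 scale0r.
  have n13 : j1 != j3.
    apply/eqP => ej; move: n12; rewrite (@b_dep j2 j1 (c - 1)) ?eqxx //.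
    by move: e; rewrite -ej => e; rewrite scalerBl scale1r -e addrAC subrr add0r.
  have n23 : j2 != j3.
    apply/eqP => ej; move: n12; rewrite (@b_dep j1 j2 (c - 1)) ?eqxx //.
    by move: e; rewrite -ej => e; rewrite scalerBl scale1r -e addrK.
  pose l1 := mk r0 j1; pose l2 := mk r0 j2; pose l3 := mk r0 j3.
  have m12 : l1 != l2 by apply: contra n12 => /eqP /mk_inj [_ ->].
  have m13 : l1 != l3 by apply: contra n13 => /eqP /mk_inj [_ ->].
  have m23 : l2 != l3 by apply: contra n23 => /eqP /mk_inj [_ ->].
  pose x := delta_mx 0 l1 + delta_mx 0 l2 - c *: delta_mx 0 l3 : 'rV[F]_(na * nb).
  have supp : forall i, (x 0 i != 0) = (i \in [set l1; l2; l3]).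
    move=> i; rewrite !inE !mxE /=.
    have [-> | n1] := eqVneq i l1.
      by rewrite eq_sym (negPf m12) eq_sym (negPf m13) /= mulr0 subr0 addr0 oner_eq0.
    have [-> | n2] := eqVneq i l2.
      by rewrite (negPf m23) /= mulr0 subr0 add0r oner_eq0.
    have [_ | n3] := eqVneq i l3.
      by rewrite /= mulr1 add0r sub0r oppr_eq0.
    by rewrite /= mulr0 addr0 subr0 eqxx.
  exists x.
    apply/andP; split.
      rewrite memC /x mulmxBl mulmxDl -[delta_mx 0 l1]scale1r -[delta_mx 0 l2]scale1r.
      by rewrite !deltaM !row_Bt !kmod_mk !scale1r e subrr.
    apply/eqP => x0; have := supp l1; by rewrite x0 mxE eqxx !inE eqxx.
  rewrite (wt_supp supp) setUC cardsU1 cards2 !inE m12 ![l3 == _]eq_sym (negPf m13) (negPf m23).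
  by [].
move=> x xC x0; rewrite ltn_neqAle C_wt_ge2 // andbT eq_sym.
apply/negP => /cards2P [l1 [l2 [ne hs]]].
have supp : forall i, (x 0 i != 0) = (i \in [set l1; l2]).
  by move=> i; rewrite -hs inE.
have ex : x = x 0 l1 *: delta_mx 0 l1 + x 0 l2 *: delta_mx 0 l2.
  apply/rowP => i; rewrite !mxE /=.
  have [-> | n1] := eqVneq i l1; first by rewrite (negPf ne) /= mulr1 mulr0 addr0.
  have [-> | n2] := eqVneq i l2; first by rewrite /= mulr1 mulr0 add0r.
  rewrite /= !mulr0 addr0; apply/eqP/negPn/negP => nz.
  by move: (supp i); rewrite nz !inE (negPf n1) (negPf n2).
have c1 : x 0 l1 != 0 by rewrite supp !inE eqxx.
move: xC; rewrite memC ex mulmxDl !deltaM !row_Bt addr_eq0 => /eqP e.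
have e2 : b (kmod l1) = ((x 0 l1)^-1 * - x 0 l2) *: b (kmod l2).
  by rewrite -scalerA scaleNr -e scalerA mulVf // scale1r.
have := b_dep e2; case: (kd l1 l2) => [e3 | [/eqP // | e3]]; by move: ne; rewrite e3 eqxx.
Qed.


Lemma mono_r n (M : 'M[F]_n) : monomialb M ->
  exists r : 'I_n -> 'I_n, [/\ injective r, forall j, M (r j) j != 0,
     forall i, exists j, r j = i &
     forall (x : 'rV[F]_n) j, (x *m M) 0 j = x 0 (r j) * M (r j) j].
Proof.
case/andP => /forallP hrow /forallP hcol.
have : forall j, exists i, [set i | M i j != 0] = [set i].
  by move=> j; apply/cards1P.
case/fin_all_exists => r hr.
have Mr : forall j, M (r j) j != 0.
  move=> j; have : r j \in [set r j] by rewrite inE.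
  by rewrite -hr inE.
have Mz : forall i j, i != r j -> M i j = 0.
  move=> i j ne; apply/eqP/negPn/negP => nz.
  have : i \in [set i | M i j != 0] by rewrite inE.
  by rewrite hr inE (negPf ne).
have ru : forall i j j', M i j != 0 -> M i j' != 0 -> j = j'.
  move=> i j j' h1 h2; have /cards1P [k hk] := hrow i.
  have : j \in [set j | M i j != 0] by rewrite inE.
  have : j' \in [set j | M i j != 0] by rewrite inE.
  by rewrite hk !inE => /eqP -> /eqP ->.
exists r; split.
- move=> j j' e; apply: (ru (r j)); first exact: Mr.
  by rewrite e; apply: Mr.
- exact: Mr.
- move=> i; have /cards1P [k hk] := hrow i.
  have : k \in [set j | M i j != 0] by rewrite hk inE.
  rewrite inE => nz; exists k; apply/eqP; rewrite eq_sym.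
  by apply: contraNT nz => ne; rewrite Mz.
move=> x j; rewrite mxE (bigD1 (r j)) //= big1 ?addr0 // => i ne.
by rewrite Mz ?mulr0.
Qed.

Lemma mono_inj n (M : 'M[F]_n) (x y : 'rV[F]_n) : monomialb M -> x *m M = y *m M -> x = y.
Proof.
case/mono_r => r [ri Mr rs ent] e.
apply/rowP => i; case: (rs i) => j <-.
have := congr1 (fun X : 'rV[F]_n => X 0 j) e; rewrite /= !ent.
by move/(mulIf (Mr j)).
Qed.

Lemma mono_wt n (M : 'M[F]_n) (x : 'rV[F]_n) : monomialb M -> wt (x *m M) = wt x.
Proof.
case/mono_r => r [ri Mr rs ent].
rewrite /wt -[in RHS](card_preimset _ ri); apply: eq_card => j.
by rewrite !inE ent mulf_eq0 (negPf (Mr j)) orbF.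
Qed.

Lemma mono1 n : monomialb (1%:M : 'M[F]_n).
Proof.
apply/andP; split; apply/forallP => i; apply/cards1P; exists i; apply/setP => j;
  rewrite !inE !mxE.
  by rewrite [j == i]eq_sym; case: (i == j); rewrite /= ?oner_eq0 ?eqxx.
by case: (j == i); rewrite /= ?oner_eq0 ?eqxx.
Qed.

Lemma Aut1 n (D : 'M[F]_n) : in_Aut D 1%:M.
Proof. by rewrite /in_Aut mono1; apply/forallP => x; rewrite mulmx1 implybb. Qed.

Lemma Aut_C n (D : 'M[F]_n) (M : 'M[F]_n) (x : 'rV[F]_n) : in_Aut D M -> (x <= D)%MS -> (x *m M <= D)%MS.
Proof. by case/andP => _ /forallP /(_ x) /implyP. Qed.

Lemma Aut_notC n (D : 'M[F]_n) (M : 'M[F]_n) (x : 'rV[F]_n) : in_Aut D M -> (x *m M <= D)%MS -> (x <= D)%MS.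
Proof.
move=> aM xM.
have mM : monomialb M by case/andP: aM.
pose S := [set y : 'rV[F]_n | (y <= D)%MS].
have : [set y *m M | y in S] = S.
  apply/eqP; rewrite eqEcard card_imset; last by move=> y z; apply: mono_inj.
  rewrite leqnn andbT; apply/subsetP => z /imsetP [y]; rewrite !inE => yD ->.
  exact: Aut_C.
move/setP/(_ (x *m M)); rewrite [in RHS]inE xM => /imsetP [y]; rewrite inE => yD.
by move/(mono_inj mM) ->.
Qed.


Lemma base_P m (w : 'rV[F]_m) : w != 0 ->
  exists2 P : 'M[F]_m, P \in unitmx & pid_mx 1 *m P = w.
Proof.
move=> w0.
have r1 : \rank w = 1%N.
  apply/eqP; rewrite eqn_leq rank_leq_row lt0n mxrank_eq0 w0.
  by [].
have := mulmx_ebase w; rewrite r1 [col_ebase w]mx11_scalar mul_scalar_mx => e.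
have cu : col_ebase w 0 0 \is a GRing.unit.
  by have := col_ebase_unit w; rewrite unitmxE det_mx11.
exists (col_ebase w 0 0 *: row_ebase w).
  by rewrite unitmxZ // row_ebase_unit.
rewrite -scalemxAr scalemxAl; exact: e.
Qed.

Lemma GL_trans m (w1 w2 : 'rV[F]_m) : w1 != 0 -> w2 != 0 ->
  exists2 G : 'M[F]_m, G \in unitmx & w1 *m G = w2.
Proof.
case/base_P => P1 u1 e1; case/base_P => P2 u2 e2.
exists (invmx P1 *m P2); first by rewrite unitmx_mul unitmx_inv u1 u2.
by rewrite mulmxA -e1 mulmxK.
Qed.

Lemma Aut_trans (k k' : 'I_(na * nb)) (al be : F) : al != 0 -> be != 0 ->
  exists2 M : 'M[F]_(na * nb), in_Aut C M &
    (al *: delta_mx (0 : 'I_1) k) *m M = be *: delta_mx 0 k'.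
Proof.
move=> a0 b0.
pose j := kmod k; pose j' := kmod k'.
have w1 : al *: b j != 0 by rewrite scaler_eq0 negb_or a0 b_neq0.
have w2 : be *: b j' != 0 by rewrite scaler_eq0 negb_or b0 b_neq0.
case: (GL_trans w1 w2) => G uG eG.
have bG0 : forall i, b i *m G != 0.
  move=> i; apply: contraNneq (b_neq0 i) => e.
  by rewrite -(mulmxK uG (b i)) e mul0mx.
have : forall i, exists p : 'I_nb * F, b i *m G = p.2 *: b p.1.
  by move=> i; case: (cover (bG0 i)) => s [c e]; exists (s, c).
case/fin_all_exists => sl hsl.
pose sg i := (sl i).1; pose lam i := (sl i).2.
have lam0 : forall i, lam i != 0.
  by move=> i; apply: contraNneq (bG0 i) => e; rewrite hsl -/(lam i) e scale0r.
have sg_inj : injective sg.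
  move=> i i' e.
  have h1 : b i = lam i *: (b (sg i) *m invmx G).
    by rewrite scalemxAl -[lam i *: _]/((sl i).2 *: b (sl i).1) -hsl (mulmxK uG).
  have h2 : b i' = lam i' *: (b (sg i) *m invmx G).
    by rewrite e scalemxAl -[lam i' *: _]/((sl i').2 *: b (sl i').1) -hsl (mulmxK uG).
  apply: (@b_dep i i' (lam i * (lam i')^-1)).
  by rewrite h1 h2 scalerA -mulrA mulVf ?mulr1.
have ej : b j *m G = (al^-1 * be) *: b j'.
  by rewrite -scalerA -eG scalemxAl scalerA mulVf ?scale1r.
have [sj lj] : sg j = j' /\ lam j = al^-1 * be.
  by apply: b_uniq (lam0 j) _; rewrite -ej hsl.
pose tau := tperm (kdiv k) (kdiv k').
pose pi l := mk (tau (kdiv l)) (sg (kmod l)).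
have pi_inj : injective pi.
  move=> l1 l2 /mk_inj [/perm_inj e1 /sg_inj e2].
  by rewrite -(mk_kdiv l1) -(mk_kdiv l2) e1 e2.
case: (injF_bij pi_inj) => pinv pK pKV.
pose M := \matrix_(l, l') (if l' == pi l then lam (kmod l) else 0) : 'M[F]_(na * nb).
have rowM : forall l, row l M = lam (kmod l) *: delta_mx 0 (pi l).
  move=> l; apply/rowP => l'; rewrite !mxE eqxx /=.
  by case: (l' == pi l); rewrite ?mulr1 ?mulr0.
exists M; last first.
  rewrite deltaM rowM scalerA -/j lj mulrA mulfV // mul1r.
  congr (_ *: delta_mx 0 _).
  by rewrite /pi tpermL sj /j' mk_kdiv.
apply/andP; split.
  apply/andP; split; apply/forallP => l; apply/cards1P.
    exists (pi l); apply/setP => l'; rewrite !inE mxE.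
    by case: (l' == pi l); rewrite ?eqxx ?lam0.
  exists (pinv l); apply/setP => l1; rewrite !inE mxE.
  have -> : (l == pi l1) = (l1 == pinv l).
    apply/eqP/eqP => [-> | ->]; by [rewrite pK | rewrite pKV].
  by case: (l1 == pinv l); rewrite ?eqxx ?lam0.
have MB : M *m Bt = Bt *m G.
  apply/row_matrixP => l; rewrite !row_mul rowM deltaM row_Bt kmod_mk row_Bt.
  by rewrite hsl.
apply/forallP => x; apply/implyP; rewrite !memC => /eqP x0.
by rewrite -mulmxA MB mulmxA x0 mul0mx.
Qed.


Lemma decomp (x y : 'rV[F]_(na * nb)) : (x <= C)%MS = (y <= C)%MS ->
  exists cx, exists cy, exists2 M, in_Aut C M &
    [/\ (cx <= C)%MS, (cy <= C)%MS & (x - cx) *m M = y - cy].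
Proof.
case: (boolP (x <= C)%MS) => xC e.
  exists x, y, 1%:M; first exact: Aut1.
  split => //; last by rewrite !subrr mul0mx.
have yC : ~~ (y <= C)%MS by rewrite -e.
case: (near xC) => cx cxC /wt1P [k [al [a0 ex]]].
case: (near yC) => cy cyC /wt1P [k' [be [b0 ey]]].
case: (Aut_trans k k' a0 b0) => M aM eM.
by exists cx, cy, M => //; split => //; rewrite ex ey.
Qed.

Lemma num_le x y i : (x <= C)%MS = (y <= C)%MS ->
  (num_at_dist C x i <= num_at_dist C y i)%N.
Proof.
case/decomp => cx [cy [M aM [cxC cyC e]]].
have mM : monomialb M by case/andP: aM.
pose f c := (c - cx) *m M + cy.
have finj : injective f.
  by move=> c1 c2 /addIr /(mono_inj mM) /addIr.
rewrite /num_at_dist -(card_imset _ finj); apply: subset_leq_card.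
apply/subsetP => z /imsetP [c]; rewrite !inE => /andP [cC /eqP hd] ->.
apply/andP; split.
  have cyB : cy *m Bt = 0 by apply/eqP; rewrite -memC.
  rewrite memC mulmxDl cyB addr0 -memC.
  apply: Aut_C aM _; rewrite memC mulmxBl.
  by move: cC cxC; rewrite !memC => /eqP -> /eqP ->; rewrite subrr.
have eq : y - ((c - cx) *m M + cy) = (x - c) *m M.
  rewrite (_ : x - c = (x - cx) - (c - cx)); last by rewrite opprB addrA subrK.
  by rewrite [RHS]mulmxBl e opprD addrA addrAC.
by rewrite /hdist /f eq mono_wt // -hd.
Qed.

Lemma comp_reg : completely_regular C.
Proof.
move=> x y; rewrite !dist_C => e i.
have e' : (x <= C)%MS = (y <= C)%MS by move: e; do 2 case: (_ <= C)%MS.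
by apply/eqP; rewrite eqn_leq !num_le.
Qed.

Lemma orbitE v : coset_orbit C v =
  if (v <= C)%MS then [set w | (w <= C)%MS] else ~: [set w | (w <= C)%MS].
Proof.
apply/setP => w; rewrite !inE; case: ifP => vC; rewrite !inE.
  apply/existsP/idP => [[M /andP [aM h]] | wC].
    move: h; rewrite !memC mulmxBl => /eqP h.
    have := Aut_C aM vC; rewrite memC => /eqP h2.
    by rewrite h2 subr0 in h; rewrite h.
  exists 1%:M; rewrite Aut1 mulmx1 /=.
  by move: wC vC; rewrite !memC mulmxBl => /eqP -> /eqP ->; rewrite subrr.
apply/existsP/idP => [[M /andP [aM h]] | wC].
  apply/negP => wC.
  have vMC : (v *m M <= C)%MS.
    move: h wC; rewrite !memC mulmxBl => /eqP h /eqP w0.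
    by rewrite w0 sub0r in h; rewrite -oppr_eq0 h.
  by have := Aut_notC aM vMC; rewrite vC.
have := @decomp v w; rewrite vC (negbTE wC) => /(_ erefl) [cx [cy [M aM [cxC cyC e]]]].
exists M; rewrite aM /=.
have ew : w = (v - cx) *m M + cy by rewrite e subrK.
have h1 : cx *m M *m Bt = 0 by apply/eqP; rewrite -memC; apply: Aut_C aM cxC.
have h2 : cy *m Bt = 0 by apply/eqP; rewrite -memC.
by rewrite memC ew !mulmxBl !mulmxDl ?mulmxBl mulNmx h1 h2 oppr0 !addr0 subrr.
Qed.

Lemma comp_trans : completely_transitive C.
Proof.
rewrite /completely_transitive cov_rad /num_coset_orbits.
pose SC := [set w : 'rV[F]_(na * nb) | (w <= C)%MS].
pose j0 : 'I_nb := Ordinal nb_gt0.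
pose v0 : 'rV[F]_(na * nb) := delta_mx 0 (mk r0 j0).
have v0C : (v0 <= C)%MS = false.
  rewrite memC /v0 -[delta_mx _ _]scale1r deltaM row_Bt kmod_mk scale1r.
  by rewrite (negPf (b_neq0 j0)).
have -> : [set coset_orbit C v | v : 'rV[F]_(na * nb)] = [set SC; ~: SC].
  apply/setP => X; rewrite !inE; apply/imsetP/idP => [[v _ ->] | ].
    by rewrite orbitE; case: ifP; rewrite eqxx ?orbT.
  case/orP => /eqP ->.
    by exists 0 => //; rewrite orbitE sub0mx.
  by exists v0 => //; rewrite orbitE v0C.
have ne : SC != ~: SC.
  by apply/eqP => /setP /(_ 0); rewrite !inE sub0mx.
by rewrite cards2 ne.
Qed.

End Main.

Unset Implicit Arguments.

Theorem theorem3p4 (F : finFieldType) (na mb nb : nat)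
  (A : 'M[F]_(1, na)) (B : 'M[F]_(mb, nb)) :
  (0 < na)%N ->
  is_generator_matrix A (repetition_code F na) ->
  is_hamming_pcm B ->
  let H := kron A B in
  let C := code_of_pcm H in
  (* (i) length n = na * nb is the ambient dimension of C : 'M_(na * nb) *)
  (code_dim C = (na * nb - mb)%N /\ covering_radius C = 1%N) /\
  (* (ii) *)
  (((1 < na)%N -> is_min_distance C 2) /\ (na = 1%N -> is_min_distance C 3)) /\
  (* (iii) *)
  [/\ Aut_transitive C, completely_transitive C & completely_regular C].
Proof.
move=> na0 hA hB H C0.
have eC : C0 = C A B by [].
rewrite eC.
split; [split | split; [split | split]].
- by apply: code_dimC.
- by apply: cov_rad.
- by move=> h; apply: mind2.
- by move=> h; apply: mind3.
- move=> u v /wt1P [k [al [a0 ->]]] /wt1P [k' [be [b0 ->]]].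
  by apply: Aut_trans.
- by apply: comp_trans.
- by apply: comp_reg.
Qed.
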